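(* Let $Q$ be a non-degenerate quadratic form of signature $(p,p)$ on a real vector space $V$, and let $\mathcal J=\{j\in\mathrm{GL}(V): j^*Q=-Q,\ j^2=\mathrm{Id}\}$. Let $X$ be a complex $\mathrm{GL}(V)$-module and $X^{\mathrm O(Q)}$ its subspace of $\mathrm O(Q)$-invariant vectors. For $j\in\mathcal J$, $j$ preserves $X^{\mathrm O(Q)}$, and one has $X^{\mathrm O(Q)}=X^{\mathrm O(Q),j}\oplus X^{\mathrm O(Q),-j}$ with $X^{\mathrm O(Q),\pm j}=\{v\in X^{\mathrm O(Q)}: jv=\pm v\}$. This decomposition is independent of the choice of $j\in\mathcal J$.
   Context: $j^*Q$ denotes the form $x\mapsto Q(jx)$. *)

(* Defs.v *)
From HB Require Import structures.
From mathcomp Require Import all_boot all_order all_algebra.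
Set Implicit Arguments. Unset Strict Implicit. Unset Printing Implicit Defensive.
Import Order.TTheory GRing.Theory Num.Theory.
Local Open Scope ring_scope.

(* V = column vectors 'cV[R]_n ; a linear map g acts by x |-> g *m x.
   A quadratic form is given by its (symmetric) Gram matrix B:
   Q(x) = x^T B x. *)
Definition qform (R : realFieldType) (n : nat) (B : 'M[R]_n) (x : 'cV[R]_n) : R :=
  (x^T *m B *m x) 0 0.

Definition sig_mx (R : realFieldType) (p q : nat) : 'M[R]_(p + q) :=
  diag_mx (row_mx (const_mx 1) (const_mx (-1))).

(* Q (Gram matrix B, symmetric) is non-degenerate of signature (p,q):
   in some basis it is diag(1,..,1,-1,..,-1) (Sylvester normal form). *)
Definition nondeg_signature (R : realFieldType) (p q : nat) (B : 'M[R]_(p + q)) : Prop :=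
  B^T = B /\ exists P : 'M[R]_(p + q), P \in unitmx /\ P^T *m B *m P = sig_mx R p q.

Definition in_OQ (R : realFieldType) (n : nat) (B : 'M[R]_n) (g : 'M[R]_n) : Prop :=
  g \in unitmx /\ forall x, qform B (g *m x) = qform B x.

Definition in_J (R : realFieldType) (n : nat) (B : 'M[R]_n) (j : 'M[R]_n) : Prop :=
  j \in unitmx /\ (forall x, qform B (j *m x) = - qform B x) /\ j *m j = 1%:M.

Definition is_GL_rep (R : realFieldType) (n : nat) (K : fieldType) (X : lmodType K)
    (rho : 'M[R]_n -> {linear X -> X}) : Prop :=
  (forall v, rho 1%:M v = v) /\
  (forall g h, g \in unitmx -> h \in unitmx -> forall v, rho (g *m h) v = rho g (rho h v)).

Definition OQ_invariant (R : realFieldType) (n : nat) (K : fieldType) (X : lmodType K)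
    (B : 'M[R]_n) (rho : 'M[R]_n -> {linear X -> X}) (v : X) : Prop :=
  forall g, in_OQ B g -> rho g v = v.

(* Main.v *)
Require Import Defs.
From HB Require Import structures.
From mathcomp Require Import all_boot all_order all_algebra.
Import Order.TTheory GRing.Theory Num.Theory.
Local Open Scope ring_scope.

Section H.
Variables (R : realFieldType) (p : nat) (B : 'M[R]_(p + p))
    (K : numClosedFieldType) (X : lmodType K) (rho : 'M[R]_(p + p) -> {linear X -> X}).
Hypothesis Hrep : is_GL_rep rho.

Lemma rhojj j v : in_J B j -> rho j (rho j v) = v.
Proof.
case: Hrep => H1 HM [ju [_ jj]].
by rewrite -HM // jj H1.
Qed.

Lemma inv_j j v : in_J B j -> OQ_invariant B rho v -> OQ_invariant B rho (rho j v).
Proof.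
move=> Hj Hv g [gu gq].
have Hj' := Hj; case: Hj' => ju [jq jj].
have [H1 HM] := Hrep.
have Hjgj : in_OQ B (j *m (g *m j)).
  split; first by rewrite !unitmx_mul ju gu.
  move=> x; by rewrite -!mulmxA jq gq jq opprK.
have E : rho j (rho g (rho j v)) = rho (j *m (g *m j)) v.
  by rewrite HM ?unitmx_mul ?gu ?ju // HM.
by rewrite -(@rhojj _ (rho g (rho j v)) Hj) E Hv.
Qed.

Lemma inv_lin a b (u w : X) : OQ_invariant B rho u -> OQ_invariant B rho w ->
  OQ_invariant B rho (a *: u + b *: w).
Proof. by move=> Hu Hw g Hg; rewrite linearD !linearZ /= Hu // Hw. Qed.

Lemma jj' j j' v : in_J B j -> in_J B j' -> OQ_invariant B rho v -> rho j' v = rho j v.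
Proof.
move=> Hj Hj' Hv.
have Hj0 := Hj; case: Hj0 => ju [jq jj].
have Hj1 := Hj'; case: Hj1 => ju' [jq' jj'].
have [H1 HM] := Hrep.
have Ho : in_OQ B (j' *m j).
  split; first by rewrite unitmx_mul ju' ju.
  by move=> x; rewrite -mulmxA jq' jq opprK.
rewrite -{1}(@rhojj _ v Hj) -HM //.
by rewrite (@inv_j _ _ Hj Hv).
Qed.
End H.

Theorem mainTheorem8 (R : realFieldType) (p : nat) (B : 'M[R]_(p + p))
    (K : numClosedFieldType) (X : lmodType K) (rho : 'M[R]_(p + p) -> {linear X -> X}) :
  @nondeg_signature R p p B ->
  is_GL_rep rho ->
  (forall j, in_J B j ->
     (* j preserves X^{O(Q)} *)
     (forall v, OQ_invariant B rho v -> OQ_invariant B rho (rho j v)) /\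
     (* X^{O(Q)} = X^{O(Q),j} + X^{O(Q),-j} *)
     (forall v, OQ_invariant B rho v ->
        exists v1 v2, [/\ OQ_invariant B rho v1, rho j v1 = v1,
                          OQ_invariant B rho v2, rho j v2 = - v2 & v = v1 + v2]) /\
     (* the sum is direct *)
     (forall v, OQ_invariant B rho v -> rho j v = v -> rho j v = - v -> v = 0)) /\
  (* independence of the choice of j *)
  (forall j j', in_J B j -> in_J B j' ->
     forall v, OQ_invariant B rho v ->
       (rho j v = v <-> rho j' v = v) /\ (rho j v = - v <-> rho j' v = - v)).
Proof.
move=> _ Hrep; split.
  move=> j Hj; split; first by move=> v; exact: (@inv_j _ _ _ _ _ _ Hrep _ v Hj).
  have h2 : (2 : K) != 0 by rewrite pnatr_eq0.
  split.
    move=> v Hv.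
    exists (2^-1 *: (v + rho j v)), (2^-1 *: (v - rho j v)).
    have Hjv := @inv_j _ _ _ _ _ _ Hrep _ _ Hj Hv.
    split.
    - by rewrite scalerDr; apply: inv_lin.
    - by rewrite linearZ linearD /= (@rhojj _ _ _ _ _ _ Hrep _ _ Hj) addrC.
    - by rewrite scalerDr scalerN -scaleNr; apply: inv_lin.
    - by rewrite linearZ linearB /= (@rhojj _ _ _ _ _ _ Hrep _ _ Hj) -scalerN opprB.
    - rewrite -scalerDr addrACA subrr addr0.
      by rewrite -mulr2n -scaler_nat scalerA (mulVf h2) scale1r.
  move=> v _ h1 h2'.
  have : v + v = 0 by rewrite -{1}h1 h2' addNr.
  by rewrite -mulr2n -scaler_nat => /eqP; rewrite scaler_eq0 (negPf h2) /= => /eqP.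
move=> j j' Hj Hj' v Hv.
by rewrite (@jj' _ _ _ _ _ _ Hrep _ _ _ Hj Hj' Hv).
Qed.
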